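(* Let $X$ be a compact metric space, $T\colon X\to X$ a homeomorphism and $\mu$ an ergodic $T$-invariant Borel probability measure. Let $H\colon X\to\mathbb{GL}^+(2,\mathbb{R})$ be continuous of the form $H(x)=\begin{pmatrix}\lambda(x)&0\\ \sigma(x)&\eta(x)\end{pmatrix}$ with $\eta(x)>0$, such that the cocycle $H$ over $T$ has dominated splitting with dominating direction $\mathrm{span}(\mathbf{e}_2)$. For $\theta\in\mathbb{R}$ let $\lambda^+(\theta)=\lambda^+(H_\theta)$ where $H_\theta(x)=H(x)R_\theta$. If $\sigma(x)=0$ for $\mu$-a.e. $x\in X$, then $\lambda^+(\theta)$ has a local maximum at $\theta=0$.
   Context: $R_\theta$: rotation by angle $\theta$; $\lambda^+(B)=\lim_{n\to\infty}\frac1n\log\|B(T^{n-1}x)\cdots B(x)\|$ for $\mu$-a.e. $x$. Dominated splitting of a cocycle $B$ over $T$: continuous invariant decomposition $\mathbb{R}^2=E(x)\oplus F(x)$ into lines and $l\ge1$ with $\|B^l(x)|_{E(x)}\|\cdot\|B^{-l}(T^lx)|_{F(T^lx)}\|<\tfrac12$ for all $x$, where $B^n(x)=B(T^{n-1}x)\cdots B(x)$ and $B^{-n}(x)=B(T^{-n}x)^{-1}\cdots B(T^{-1}x)^{-1}$; $F$ is the dominating direction. *)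

(* Defs.v *)
From HB Require Import structures.
From mathcomp Require Import all_boot all_order all_algebra.
From mathcomp Require Import all_classical all_reals all_analysis.
Set Implicit Arguments. Unset Strict Implicit. Unset Printing Implicit Defensive.
Import Order.TTheory GRing.Theory Num.Theory.
Import numFieldNormedType.Exports.
Local Open Scope classical_set_scope.
Local Open Scope ring_scope.

Section Defs.
Context {R : realType}.

Definition mat2 (a b c d : R) : 'M[R]_2 :=
  \matrix_(i < 2, j < 2)
    if i == ord0 then (if j == ord0 then a else b) else (if j == ord0 then c else d).

Definition rotation (theta : R) : 'M[R]_2 :=
  mat2 (cos theta) (- sin theta) (sin theta) (cos theta).

Definition e2line : 'M[R]_2 := mat2 0 0 0 1.

Definition vnorm (v : 'cV[R]_2) : R := Num.sqrt (\sum_(i < 2) v i ord0 ^+ 2).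

Fixpoint cocycle {X : Type} (T : X -> X) (B : X -> 'M[R]_2) (n : nat) (x : X)
  : 'M[R]_2 :=
  match n with
  | 0 => 1%:M
  | n'.+1 => B (iter n' T x) *m cocycle T B n' x
  end.

Fixpoint cocycle_inv {X : Type} (Tinv : X -> X) (B : X -> 'M[R]_2) (n : nat)
  (x : X) : 'M[R]_2 :=
  match n with
  | 0 => 1%:M
  | n'.+1 => invmx (B (iter n Tinv x)) *m cocycle_inv Tinv B n' x
  end.

(** A line in R^2, represented by the orthogonal projection matrix onto it;
    the line itself is [set v | P *m v = v]. *)
Definition is_line (P : 'M[R]_2) : Prop :=
  P^T = P /\ P *m P = P /\ \rank P = 1%N.

(** Lines are represented by their orthogonal projections, so continuity of
    the line fields is continuity of the projection-valued maps. *)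
Definition dominated_splitting {X : topologicalType} (T Tinv : X -> X)
  (B : X -> 'M[R]_2) (E F : X -> 'M[R]_2) : Prop :=
  [/\ (forall x, is_line (E x) /\ is_line (F x)),
      continuous E /\ continuous F,
      (forall x (v : 'cV[R]_2),
          (E (T x) *m v = v <-> exists2 u, E x *m u = u & v = B x *m u)
       /\ (F (T x) *m v = v <-> exists2 u, F x *m u = u & v = B x *m u)),
      (forall x (v : 'cV[R]_2), E x *m v = v -> F x *m v = v -> v = 0) &
      exists2 l : nat, (0 < l)%N &
        forall x (u w : 'cV[R]_2),
          E x *m u = u -> u != 0 ->
          F (iter l T x) *m w = w -> w != 0 ->
          (vnorm (cocycle T B l x *m u) / vnorm u) *
          (vnorm (cocycle_inv Tinv B l (iter l T x) *m w) / vnorm w) < 2^-1 ].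

End Defs.

(* Main.v *)
Require Import Defs.
From HB Require Import structures.
From mathcomp Require Import all_boot all_order all_algebra.
From mathcomp Require Import all_classical all_reals all_analysis.
From mathcomp Require Import ring lra.
Import Order.TTheory GRing.Theory Num.Theory.
Import numFieldNormedType.Exports.
Local Open Scope classical_set_scope.
Local Open Scope ring_scope.

Section Aux.
Context {R : realType}.

Lemma sum2 (F : 'I_2 -> R) : \sum_(i < 2) F i = F 0 + F 1.
Proof.
rewrite big_ord_recl big_ord1; congr (_ + F _); exact: val_inj.
Qed.

Definition cv2 (a b : R) : 'cV[R]_2 :=
  \matrix_(i < 2, j < 1) if i == ord0 then a else b.

Lemma cv2_0 (a b : R) : cv2 a b ord0 ord0 = a.
Proof. by rewrite mxE. Qed.
Lemma cv2_1 (a b : R) : cv2 a b 1 ord0 = b.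
Proof. by rewrite mxE. Qed.

Lemma cv2_eta (v : 'cV[R]_2) : v = cv2 (v ord0 ord0) (v 1 ord0).
Proof.
apply/matrixP => i j; rewrite mxE (ord1 j).
by case: i => [[|[|//]] Hi]; rewrite /=; congr (v _ _); apply: val_inj.
Qed.

Lemma mat2E (a b c d : R) (i j : 'I_2) : mat2 a b c d i j =
  if i == ord0 then (if j == ord0 then a else b) else (if j == ord0 then c else d).
Proof. by rewrite mxE. Qed.

Lemma mat2_cv2 (a b c d x y : R) :
  mat2 a b c d *m cv2 x y = cv2 (a * x + b * y) (c * x + d * y).
Proof.
apply/matrixP => i j; rewrite !mxE sum2 !mxE /=.
by case: ifP.
Qed.

Lemma mat2_mul (a b c d a' b' c' d' : R) :
  mat2 a b c d *m mat2 a' b' c' d' =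
  mat2 (a * a' + b * c') (a * b' + b * d') (c * a' + d * c') (c * b' + d * d').
Proof.
apply/matrixP => i j; rewrite !mxE sum2 !mxE /=.
by case: ifP; case: ifP.
Qed.

Lemma mat2_eta (M : 'M[R]_2) : M = mat2 (M 0 0) (M 0 1) (M 1 0) (M 1 1).
Proof.
apply/matrixP => i j; rewrite mxE.
by case: i => [[|[|//]] Hi]; case: j => [[|[|//]] Hj]; rewrite /=; congr (M _ _); apply: val_inj.
Qed.

Lemma det_mat2 (a b c d : R) : \det (mat2 a b c d) = a * d - b * c.
Proof.
rewrite (expand_det_row _ 0) sum2 /cofactor !det_mx11 !mxE /=.
by rewrite /= !add0n expr0 modn_small // expr1 mul1r mulN1r mulrN.
Qed.

Lemma vnorm_cv2 (a b : R) : vnorm (cv2 a b) = Num.sqrt (a ^+ 2 + b ^+ 2).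
Proof. by rewrite /vnorm sum2 !mxE. Qed.

Lemma rotation0 : rotation (0 : R) = 1%:M.
Proof.
rewrite /rotation cos0 sin0 oppr0; apply/matrixP => i j; rewrite !mxE.
by case: i => [[|[|//]] Hi]; case: j => [[|[|//]] Hj].
Qed.



Lemma ltr2 : (0:R) < 2. Proof. by []. Qed.

Lemma vnorm_e2 (x : R) : vnorm (cv2 0 x) = `|x|.
Proof. by rewrite vnorm_cv2 expr0n /= add0r sqrtr_sqr. Qed.

Lemma cv2_neq0 (u : 'cV[R]_2) : u != 0 -> 0 < u ord0 ord0 ^+ 2 + u 1 ord0 ^+ 2.
Proof.
move=> u0; rewrite lt_neqAle addr_ge0 ?sqr_ge0 // andbT eq_sym.
apply: contra u0 => /eqP h.
have h0 : u ord0 ord0 = 0 by apply/eqP; rewrite -sqrf_eq0; apply/eqP; nra.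
have h1 : u 1 ord0 = 0 by apply/eqP; rewrite -sqrf_eq0; apply/eqP; nra.
apply/eqP; rewrite (cv2_eta u) h0 h1; apply/matrixP => i j; rewrite !mxE.
by case: ifP.
Qed.

Lemma line_vec (P : 'M[R]_2) : is_line P -> exists2 u : 'cV[R]_2, P *m u = u & u != 0.
Proof.
move=> [_ [PP rk]].
have P0 : P != 0 by apply/eqP => P0; move: rk; rewrite P0 mxrank0.
have [j Hj] : exists j : 'I_2, col j P != 0.
  apply/existsP; apply: contraR P0 => /existsPn h; apply/eqP/matrixP => i j.
  have := h j; rewrite negbK => /eqP /matrixP /(_ i ord0).
  by rewrite !mxE.
exists (col j P) => //.
by rewrite colE mulmxA PP.
Qed.

Lemma inv_mat2_e2 (a c d x : R) : a != 0 -> d != 0 ->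
  invmx (mat2 a 0 c d) *m cv2 0 x = cv2 0 (x / d).
Proof.
move=> a0 d0.
have U : mat2 a 0 c d \in unitmx by rewrite unitmxE det_mat2 unitfE mul0r subr0 mulf_neq0.
have -> : cv2 0 x = mat2 a 0 c d *m cv2 0 (x / d).
  rewrite mat2_cv2 !mulr0 !mul0r addr0 add0r mulrCA divff ?mulr1 //.
by rewrite mulKmx.
Qed.


Section Coc.
Variables (X : Type) (T Tinv : X -> X) (lam sig eta : X -> R).
Let B := fun y => mat2 (lam y) 0 (sig y) (eta y).

Lemma iter_cancel : cancel T Tinv -> forall n y, iter n Tinv (iter n T y) = y.
Proof.
move=> TK; elim=> // n IH y.
by rewrite iterSr iterS TK IH.
Qed.

Lemma cocycle_diag n y : (forall i, (i < n)%N -> sig (iter i T y) = 0) ->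
  cocycle T B n y = mat2 (\prod_(i < n) lam (iter i T y)) 0 0
                         (\prod_(i < n) eta (iter i T y)).
Proof.
elim: n => [_|n IH h].
  rewrite !big_ord0 /=; apply/matrixP => i j; rewrite !mxE.
  by case: i => [[|[|//]] Hi]; case: j => [[|[|//]] Hj].
rewrite /= IH; last by move=> i Hi; apply: h; apply: ltnW.
rewrite /B h // mat2_mul !big_ord_recr /=.
by rewrite !mulr0 !mul0r !addr0 add0r [lam _ * _]mulrC [eta _ * _]mulrC.
Qed.

Lemma cocycle_inv_e2 n y : cancel T Tinv -> (forall z, lam z != 0) ->
  (forall z, eta z != 0) ->
  cocycle_inv Tinv B n (iter n T y) *m cv2 0 1 =
  cv2 0 (\prod_(i < n) eta (iter i T y))^-1.
Proof.
move=> TK l0 e0; elim: n y => [|n IH] y.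
  by rewrite /= mul1mx big_ord0 invr1.
rewrite /= -mulmxA -!iterS iter_cancel // iterSr IH inv_mat2_e2 //.
rewrite big_ord_recl /= invfM mulrC; congr (cv2 0 (_ * _)).
by congr (_^-1); apply: eq_bigr => i _; rewrite -iterSr.
Qed.

End Coc.

Lemma dom_prod (L p u0 u1 : R) : 0 < L -> 0 < p -> 0 < u0 ^+ 2 + u1 ^+ 2 ->
 Num.sqrt ((L * u0 + 0 * u1) ^+ 2 + (0 * u0 + p * u1) ^+ 2) / Num.sqrt (u0 ^+ 2 + u1 ^+ 2) *
   (`|p^-1| / `|1|) < 2^-1 -> L * 2 < p.
Proof.
move=> L0 p0 B0.
rewrite !mul0r addr0 add0r normr1 divr1 gtr0_norm ?invr_gt0 //.
set A := _ + _.
set B := u0 ^+ 2 + u1 ^+ 2.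
have A0 : 0 <= A by rewrite /A addr_ge0 // sqr_ge0.
have sB : 0 < Num.sqrt B by rewrite sqrtr_gt0.
have sA0 : 0 <= Num.sqrt A by [].
move=> h.
have h2 : Num.sqrt A * 2 < p * Num.sqrt B.
  have e : Num.sqrt A * 2 = (Num.sqrt A / Num.sqrt B * p^-1) * (2 * (p * Num.sqrt B)).
    by field; rewrite gt_eqF // gt_eqF.
  rewrite e; have : 0 < 2 * (p * Num.sqrt B) by rewrite mulr_gt0 // mulr_gt0.
  move=> q.
  have h' : (Num.sqrt A / Num.sqrt B * p^-1) * (2 * (p * Num.sqrt B)) < 2^-1 * (2 * (p * Num.sqrt B)) by rewrite ltr_pM2r.
  have e2 : 2^-1 * (2 * (p * Num.sqrt B)) = p * Num.sqrt B by field.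
  by apply: (lt_le_trans h'); rewrite e2.
have eA : Num.sqrt A ^+ 2 = A by rewrite sqr_sqrtr.
have eB : Num.sqrt B ^+ 2 = B by rewrite sqr_sqrtr // ltW.
have h3 : A * 4 < p ^+ 2 * B.
  rewrite -eA -eB.
  have : 0 <= Num.sqrt A * 2 by rewrite mulr_ge0.
  move=> z; nra.
move: h3; rewrite /A /B => h3.
rewrite ltNge; apply/negP => h4.
have h5 : p ^+ 2 <= 4 * L ^+ 2 by nra.
have : p ^+ 2 * u0 ^+ 2 <= 4 * L ^+ 2 * u0 ^+ 2 by rewrite ler_wpM2r // sqr_ge0.
have : 0 <= p ^+ 2 * u1 ^+ 2 by rewrite mulr_ge0 // sqr_ge0.
nra.
Qed.

Lemma dom_l (X : topologicalType) (T Tinv : X -> X) (lam sig eta : X -> R) E :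
  cancel T Tinv -> (forall z, 0 < lam z) -> (forall z, 0 < eta z) ->
  dominated_splitting T Tinv (fun x => mat2 (lam x) 0 (sig x) (eta x)) E (fun _ => e2line) ->
  exists2 l : nat, (0 < l)%N & forall y, (forall i, (i < l)%N -> sig (iter i T y) = 0) ->
    \prod_(i < l) lam (iter i T y) * 2 < \prod_(i < l) eta (iter i T y).
Proof.
move=> TK lp ep [lines _ _ _ [l l0 Hd]]; exists l => // y hs.
have [u Eu u0] := line_vec (E y) (proj1 (lines y)).
have e2e : e2line *m cv2 0 1 = cv2 0 1 :> 'cV[R]_2.
  by rewrite /e2line mat2_cv2 !mul0r !add0r mulr1.
have e20 : cv2 0 1 != 0 :> 'cV[R]_2.
  by apply/eqP => /matrixP /(_ 1 ord0); rewrite !mxE /= => /eqP; rewrite oner_eq0.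
have := Hd y u (cv2 0 1) Eu u0 e2e e20.
rewrite cocycle_inv_e2 // ?cocycle_diag //; last by move=> z; rewrite gt_eqF.
  2: by move=> z; rewrite gt_eqF.
rewrite vnorm_e2 {1}(cv2_eta u) mat2_cv2 vnorm_cv2 [in vnorm u](cv2_eta u) vnorm_cv2 vnorm_e2.
apply: dom_prod.
- by apply: prodr_gt0.
- by apply: prodr_gt0.
- exact: cv2_neq0.
Qed.

Lemma cone (lm et ph p q : nat -> R) (c s g k Phi : R) :
 (forall n, 0 < lm n) -> (forall n, 0 < et n) -> (forall n, 1 <= ph n <= Phi) ->
 (forall n, lm n * ph n.+1 <= g * et n * ph n) ->
 0 <= c <= 1 -> 0 <= g -> 0 < k ->
 g * (k + `|s| * Phi) <= k * (c - `|s| * k) ->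
 (forall n, p n.+1 = lm n * (c * p n - s * q n)) ->
 (forall n, q n.+1 = et n * (s * p n + c * q n)) ->
 s * p 0 <= 0 -> ph 0 * `|p 0| <= k * q 0 ->
 forall n, [/\ s * p n <= 0, ph n * `|p n| <= k * q n &
               q n <= q 0 * \prod_(i < n) et i].
Proof.
move=> lm0 et0 phb phs /andP[c0 c1] g0 k0 gk pS qS sp0 php0.
elim=> [|n [spn phpn qn]].
  by split => //; rewrite big_ord0 mulr1.
have [ph1 phP] := andP (phb n).
have [ph1' phP'] := andP (phb n.+1).
have qn0 : 0 <= q n.
  have : 0 <= ph n * `|p n| by apply: mulr_ge0 => //; lra.
  move=> h; have : 0 <= k * q n by lra.
  by rewrite pmulr_rge0.
have pk : `|p n| <= k * q n.
  apply: le_trans phpn; rewrite ler_peMl //.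
have sp_low : - (`|s| * (k * q n)) <= s * p n.
  have : `|s * p n| <= `|s| * (k * q n) by rewrite normrM ler_wpM2l.
  rewrite ler_norml => /andP[+ _]; done.
have lm0n := lm0 n; have et0n := et0 n.
split.
- rewrite pS.
  have -> : s * (lm n * (c * p n - s * q n)) = lm n * (c * (s * p n) - s ^+ 2 * q n) by ring.
  rewrite pmulr_rle0 // subr_le0.
  apply: (@le_trans _ _ 0); first by rewrite mulr_ge0_le0.
  by rewrite mulr_ge0 // sqr_ge0.
- have q1 : et n * ((c - `|s| * k) * q n) <= q n.+1.
    rewrite qS ler_pM2l //; nra.
  have e1 : `|c * p n - s * q n| <= c * `|p n| + `|s| * q n.
    apply: le_trans (ler_normB _ _) _.
    by rewrite !normrM (ger0_norm c0) (ger0_norm qn0).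
  rewrite pS normrM (gtr0_norm lm0n).
  apply: (@le_trans _ _ (g * et n * ph n * (c * `|p n| + `|s| * q n))).
    have -> : ph n.+1 * (lm n * `|c * p n - s * q n|) = lm n * ph n.+1 * `|c * p n - s * q n| by ring.
    apply: ler_pM => //.
      by apply: mulr_ge0; [apply: ltW | lra].
  have h2 : ph n * (c * `|p n| + `|s| * q n) <= (k + `|s| * Phi) * q n.
    have : ph n * (c * `|p n|) <= k * q n.
      apply: le_trans phpn; rewrite mulrCA ler_piMl //.
      by apply: mulr_ge0 => //; lra.
    have : ph n * (`|s| * q n) <= `|s| * Phi * q n.
      have -> : `|s| * Phi * q n = Phi * (`|s| * q n) by ring.
      by apply: ler_wpM2r => //; apply: mulr_ge0.
    lra.
  have h3 : g * et n * ph n * (c * `|p n| + `|s| * q n) <= g * et n * ((k + `|s| * Phi) * q n).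
    by rewrite -mulrA ler_wpM2l // mulr_ge0 // ltW.
  apply: le_trans h3 _.
  have h4 : g * et n * ((k + `|s| * Phi) * q n) <= et n * (k * ((c - `|s| * k) * q n)).
    have -> : g * et n * ((k + `|s| * Phi) * q n) = et n * q n * (g * (k + `|s| * Phi)) by ring.
    have -> : et n * (k * ((c - `|s| * k) * q n)) = et n * q n * (k * (c - `|s| * k)) by ring.
    by rewrite ler_wpM2l // mulr_ge0 // ltW.
  apply: le_trans h4 _.
  have -> : et n * (k * ((c - `|s| * k) * q n)) = k * (et n * ((c - `|s| * k) * q n)) by ring.
  by rewrite ler_wpM2l // ltW.
- rewrite qS big_ord_recr /=.
  have : s * p n + c * q n <= q n by nra.
  move=> h; apply: (@le_trans _ _ (et n * q n)); first by rewrite ler_wpM2l // ltW.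
  by rewrite mulrA [_ * et n]mulrC ler_wpM2l // ltW.
Qed.
Definition phiw (g : R) (l : nat) (r : nat -> R) (n : nat) : R :=
  \sum_(j < l) g ^- j * \prod_(i < j) r (n + i)%N.

Lemma phiw_bounds (g M : R) (l : nat) (r : nat -> R) n :
  (0 < l)%N -> 0 < g -> (forall n, 0 < r n <= M) ->
  1 <= phiw g l r n <= \sum_(j < l) g ^- j * \prod_(i < j) M.
Proof.
move=> l0 g0 rb; apply/andP; split.
  case: l l0 => // l' _; rewrite /phiw big_ord_recl /= big_ord0 expr0 invr1 mul1r.
  rewrite lerDl; apply: sumr_ge0 => j _; apply: mulr_ge0.
    by rewrite invr_ge0 exprn_ge0 // ltW.
  by apply: prodr_ge0 => i _; have /andP[/ltW] := rb (n + i)%N.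
apply: ler_sum => j _; rewrite ler_wpM2l //.
  by rewrite invr_ge0 exprn_ge0 // ltW.
apply: ler_prod => i _; have /andP[h1 ->] := rb (n + i)%N.
by rewrite ltW.
Qed.

Lemma phiw_step (g : R) (l : nat) (r : nat -> R) n :
  (0 < l)%N -> 0 < g -> (forall n, 0 < r n) ->
  \prod_(i < l) r (n + i)%N <= g ^+ l ->
  r n * phiw g l r n.+1 <= g * phiw g l r n.
Proof.
move=> l0 g0 rp hl.
case: l l0 hl => // l' _ hl.
have gU : g != 0 by rewrite gt_eqF.
pose a j := g ^- j * \prod_(i < j.+1) r (n + i)%N.
have E1 : r n * phiw g l'.+1 r n.+1 = \sum_(j < l'.+1) a j.
  rewrite /phiw mulr_sumr; apply: eq_bigr => j _.
  rewrite /a big_ord_recl addn0 mulrCA; congr (_ * (_ * _)).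
  by apply: eq_bigr => i _; rewrite addSnnS.
have E2 : g * phiw g l'.+1 r n = g + \sum_(j < l') a j.
  rewrite /phiw big_ord_recl big_ord0 expr0 invr1 mulr1 mulrDr mulr1.
  congr (_ + _); rewrite mulr_sumr; apply: eq_bigr => j _.
  rewrite /a /= mulrA exprS invfM mulrA divff // mul1r.
  by rewrite /bump leq0n add1n.
rewrite E1 E2 big_ord_recr /= addrC lerD2r /a.
rewrite -(ler_pM2l (exprn_gt0 l' g0)) mulrA divff ?expf_neq0 // mul1r.
by rewrite -exprSr.
Qed.

Lemma mxnorm_le (M : 'M[R]_2) C : 0 <= C -> (forall i j, `|M i j| <= C) -> `|M| <= C.
Proof.
move=> C0 h.
have -> : `|M| = mx_norm M by [].
rewrite mx_normrE; apply: bigmax_le => // [[i j]] _; exact: h.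
Qed.
Lemma mxnorm_ge (M : 'M[R]_2) i j : `|M i j| <= `|M|.
Proof.
have -> : `|M| = mx_norm M by [].
by rewrite mx_normrE; apply: (le_bigmax _ _ (i, j)).
Qed.

Lemma mul_cv2E (M : 'M[R]_2) a b i : (M *m cv2 a b) i ord0 = M i 0 * a + M i 1 * b.
Proof. by rewrite !mxE sum2 !mxE. Qed.

Section Orbit.
Variables (X : Type) (T : X -> X) (lam sig eta : X -> R) (th : R) (x : X).
Let Bt := fun y => mat2 (lam y) 0 (sig y) (eta y) *m rotation th.
Hypothesis good : forall n, sig (iter n T x) = 0.

Lemma orbit_rec (v0 : 'cV[R]_2) n :
  let v := fun n => cocycle T Bt n x *m v0 in
  v n.+1 ord0 ord0 = lam (iter n T x) * (cos th * v n ord0 ord0 - sin th * v n 1 ord0) /\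
  v n.+1 1 ord0 = eta (iter n T x) * (sin th * v n ord0 ord0 + cos th * v n 1 ord0).
Proof.
move=> v; rewrite /v /= -mulmxA [cocycle _ _ _ _ *m _]cv2_eta /Bt good.
rewrite /rotation mat2_mul mat2_cv2 !cv2_0 !cv2_1.
split; ring.
Qed.

Lemma orbit_vec (v0 : 'cV[R]_2) (g k : R) (ph : nat -> R) :
  (forall z, 0 < lam z) -> (forall z, 0 < eta z) ->
  (forall n, 1 <= ph n <= k) ->
  (forall n, lam (iter n T x) * ph n.+1 <= g * eta (iter n T x) * ph n) ->
  0 <= cos th -> 0 <= g ->
  g * (k + `|sin th| * k) <= k * (cos th - `|sin th| * k) ->
  sin th * v0 ord0 ord0 <= 0 -> ph 0%N * `|v0 ord0 ord0| <= k * 1 -> v0 1 ord0 = 1 ->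
  forall n i, `|(cocycle T Bt n x *m v0) i ord0| <= k * \prod_(i < n) eta (iter i T x).
Proof.
move=> lp ep phb phs c0 g0 gk sp0 ph0 v01 n i.
pose p m := (cocycle T Bt m x *m v0) ord0 ord0.
pose q m := (cocycle T Bt m x *m v0) 1 ord0.
have k1 : 1 <= k by have /andP[h1 h2] := phb 0%N; apply: le_trans h2.
have k0 : 0 < k by apply: lt_le_trans k1.
have p0 : p 0%N = v0 ord0 ord0 by rewrite /p /= mul1mx.
have q0 : q 0%N = 1 by rewrite /q /= mul1mx.
have := @cone (fun m => lam (iter m T x)) (fun m => eta (iter m T x)) ph p q
  (cos th) (sin th) g k k (fun m => lp _) (fun m => ep _) phb phs.
rewrite c0 cos_le1 /= => /(_ isT g0 k0 gk).
have pS : forall m, p m.+1 = lam (iter m T x) * (cos th * p m - sin th * q m).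
  by move=> m; have [h _] := orbit_rec v0 m; exact: h.
have qS : forall m, q m.+1 = eta (iter m T x) * (sin th * p m + cos th * q m).
  by move=> m; have [_ h] := orbit_rec v0 m; exact: h.
rewrite p0 q0 => /(_ pS qS sp0 ph0 n) [_ php qb].
rewrite mul1r in qb.
have /andP[phn1 _] := phb n.
have qn0 : 0 <= q n.
  have : 0 <= ph n * `|p n| by apply: mulr_ge0 => //; apply: le_trans phn1.
  move=> h; have : 0 <= k * q n by apply: le_trans php.
  by rewrite pmulr_rge0.
have pk : `|p n| <= k * q n by apply: le_trans php; rewrite ler_peMl.
have P0 : 0 <= \prod_(i < n) eta (iter i T x) by apply: prodr_ge0 => j _; apply: ltW.
case: i => [[|[|//]] Hi].
- have -> : Ordinal Hi = ord0 by apply: val_inj.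
  by apply: le_trans pk _; rewrite ler_wpM2l // ltW.
- have -> : Ordinal Hi = 1 by apply: val_inj.
  rewrite -/(q n) ger0_norm //; apply: le_trans qb _.
  by rewrite ler_peMl.
Qed.

Lemma orbit_bound (g k : R) (ph : nat -> R) :
  (forall z, 0 < lam z) -> (forall z, 0 < eta z) ->
  (forall n, 1 <= ph n <= k) ->
  (forall n, lam (iter n T x) * ph n.+1 <= g * eta (iter n T x) * ph n) ->
  0 <= cos th -> 0 <= g ->
  g * (k + `|sin th| * k) <= k * (cos th - `|sin th| * k) ->
  forall n, `|cocycle T Bt n x| <= 2 * k * \prod_(i < n) eta (iter i T x).
Proof.
move=> lp ep phb phs c0 g0 gk n.
pose s' : R := if 0 <= sin th then 1 else -1.
have s'2 : s' * s' = 1 by rewrite /s'; case: ifP => _; rewrite ?mulrNN mulr1.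
have s'n : `|s'| = 1 by rewrite /s'; case: ifP => _; rewrite ?normrN normr1.
have ss' : sin th * - s' <= 0.
  rewrite /s'; case: ifP => h; first by rewrite mulrN1 oppr_le0.
  by rewrite opprK mulr1 ltW // ltNge h.
have k1 : 1 <= k by have /andP[h1 h2] := phb 0%N; apply: le_trans h2.
have k0 : 0 < k by apply: lt_le_trans k1.
have /andP[ph01 ph0k] := phb 0%N.
have Hv := orbit_vec (cv2 0 1) g k ph lp ep phb phs c0 g0 gk.
rewrite !cv2_0 !cv2_1 mulr0 normr0 mulr0 mulr1 in Hv.
have Hv' := Hv (le_refl _) (ltW k0) erefl n.
have Hw := orbit_vec (cv2 (- s') 1) g k ph lp ep phb phs c0 g0 gk.
rewrite !cv2_0 !cv2_1 normrN s'n mulr1 in Hw.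
have Hw' := Hw ss' (ltac:(by rewrite mulr1)) erefl n.
set M := cocycle T Bt n x in Hv' Hw' *.
have P0 : 0 <= \prod_(i < n) eta (iter i T x) by apply: prodr_ge0 => j _; apply: ltW.
apply: mxnorm_le.
  by rewrite mulr_ge0 // mulr_ge0 // ltW.
move=> i j.
have ev := Hv' i; have ew := Hw' i.
rewrite !mul_cv2E in ev ew.
case: j => [[|[|//]] Hj].
- have -> : Ordinal Hj = 0 by apply: val_inj.
  have -> : M i 0 = s' * ((M i 0 * 0 + M i 1 * 1) - (M i 0 * - s' + M i 1 * 1)).
    by rewrite !mulr0 !add0r !mulr1 mulrN opprD opprK addrA [M i 1 + _]addrC addrK mulrCA s'2 mulr1.
  rewrite normrM s'n mul1r; apply: le_trans (ler_normB _ _) _.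
  have e2k : 2 * k * \prod_(i0 < n) eta (iter i0 T x) = k * \prod_(i0 < n) eta (iter i0 T x) + k * \prod_(i0 < n) eta (iter i0 T x) by ring.
  by rewrite e2k lerD.
- have -> : Ordinal Hj = 1 by apply: val_inj.
  move: ev; rewrite mulr0 add0r mulr1 => ev.
  apply: le_trans ev _; rewrite -mulrA ler_peMl //.
  by rewrite mulr_ge0 // ltW.
  by rewrite ler1n.
Qed.

End Orbit.


Lemma bern (a : R) n : 0 <= a <= 1 -> 1 - n%:R * a <= (1 - a) ^+ n.
Proof.
move=> /andP[a0 a1]; elim: n => [|n IH]; first by rewrite mul0r subr0 expr0.
rewrite exprS.
have h : (1 - a) * (1 - n%:R * a) <= (1 - a) * (1 - a) ^+ n by rewrite ler_wpM2l // subr_ge0.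
apply: le_trans h; rewrite -natr1.
have : 0 <= n%:R * a ^+ 2 by rewrite mulr_ge0 // sqr_ge0.
move=> h2; rewrite expr2 in h2; nra.
Qed.

Lemma cocycle_det (X : Type) (T : X -> X) (B : X -> 'M[R]_2) n x :
  (forall y, \det (B y) != 0) -> \det (cocycle T B n x) != 0.
Proof.
move=> h; elim: n => [|n IH] /=; first by rewrite det1 oner_eq0.
by rewrite det_mulmx mulf_neq0.
Qed.

Lemma det_rotation th : \det (rotation th) = 1 :> R.
Proof. by rewrite det_mat2 mulNr opprK -!expr2 cos2Dsin2. Qed.
Lemma ninv_cvg : (fun n : nat => n%:R^-1 : R) @ \oo --> 0.
Proof.
rewrite -cvg_shiftS; exact: cvg_harmonic.
Qed.

Lemma lim_compare (a b : nat -> R) (C la lb : R) :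
  a @ \oo --> la -> b @ \oo --> lb ->
  (forall n, a n <= b n + n%:R^-1 * C) -> la <= lb.
Proof.
move=> ha hb h.
have hc : (fun n => b n + n%:R^-1 * C) @ \oo --> lb + 0 * C.
  apply: cvgD => //; apply: cvgMl; exact: ninv_cvg.
rewrite mul0r addr0 in hc.
apply: (ler_cvg_to ha hc); exact: nearW.
Qed.

Lemma trig_near (e : R) : 0 < e -> exists2 d : R, 0 < d &
  forall t, `|t| < d -> `|sin t| < e /\ 1 - e < cos t.
Proof.
move=> e0.
have h1 : \forall t \near (0:R), `|sin 0 - sin t| < e.
  exact: (@cvgr_dist_lt _ _ _ _ _ sin (sin 0) (@continuous_sin R 0) e e0).
have h2 : \forall t \near (0:R), `|cos 0 - cos t| < e.
  exact: (@cvgr_dist_lt _ _ _ _ _ cos (cos 0) (@continuous_cos R 0) e e0).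
have [d /= d0 H] := (iffLR (nbhs_ballP _ _)) (filterI h1 h2); exists d => // t td.
have : ball (0 : R) d t by rewrite -ball_normE /ball_ /= sub0r normrN.
move=> /H [/= s1 c1]; rewrite sin0 sub0r normrN in s1.
rewrite cos0 in c1; split => //.
move: c1; rewrite ltr_norml => /andP[_]; lra.
Qed.
End Aux.
Lemma iter_cont (X : topologicalType) (T : X -> X) n :
  continuous T -> continuous (iter n T).
Proof.
move=> Tc; elim: n => [|n IH] x /=; first exact: cvg_id.
exact: (continuous_comp (IH x) (Tc _)).
Qed.

Lemma good_ae (R : realType) (X : pseudoPMetricType R)
  (mu : probability (g_sigma_algebraType (@open X)) R) (T : X -> X) (sig : X -> R) :
  continuous T -> continuous sig ->
  (forall A : set (g_sigma_algebraType (@open X)),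
      measurable A -> mu (T @^-1` A) = mu A) ->
  {ae mu, forall x, sig x = 0} -> {ae mu, forall x, forall n, sig (iter n T x) = 0}.
Proof.
move=> Tc sc Tinv hs.
pose Z n : set (g_sigma_algebraType (@open X)) :=
  (iter n T) @^-1` (sig @^-1` [set r | r != 0]).
have Zo : forall n, open (Z n : set X).
  move=> n; rewrite /Z -comp_preimage; apply: open_comp; last exact: open_neq.
  move=> x _; apply: continuous_comp; [exact: iter_cont|exact: sc].
have Zm : forall n, measurable (Z n) by move=> n; apply: sub_gen_smallest; exact: Zo.
have Z0 : mu (Z 0%N) = 0%E.
  apply: (measure_negligible (Zm 0%N)).
  apply: negligibleS hs => x /= /eqP h; exact: h.
have Zn : forall n, mu (Z n) = 0%E.
  elim=> // n IH; rewrite -IH -(Tinv (Z n)) //.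
  by congr (mu _); rewrite /Z; apply/seteqP; split => x /=; rewrite -iterS iterSr.
have : mu.-negligible (\bigcup_n Z n).
  apply: negligible_bigcup => n; exists (Z n); split => //; exact: Zn.
move=> hN; apply: (negligibleS _ hN) => x /= /existsNP [n /eqP h]; exists n => //.
Qed.

Lemma ae_point (R : realType) (X : pseudoPMetricType R)
  (mu : probability (g_sigma_algebraType (@open X)) R) (P : X -> Prop) :
  {ae mu, forall x, P x} -> exists x, P x.
Proof.
move=> h.
have m0 : (0 < mu [set: g_sigma_algebraType (@open X)])%E by rewrite probability_setT lte01.
have PF := ae_properfilter_algebraOfSetsType m0.
have [x Px] := @filter_ex _ _ PF _ h.
by exists x.
Qed.

Theorem lemma3p8 (R : realType) (X : pseudoPMetricType R)
  (mu : probability (g_sigma_algebraType (@open X)) R)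
  (T Tinv : X -> X) (lam sig eta : X -> R) :
  hausdorff_space X -> compact [set: X] ->
  continuous T -> continuous Tinv -> cancel T Tinv -> cancel Tinv T ->
  (forall A : set (g_sigma_algebraType (@open X)),
      measurable A -> mu (T @^-1` A) = mu A) ->
  (forall A : set (g_sigma_algebraType (@open X)),
      measurable A -> T @^-1` A = A -> mu A = 0%E \/ mu A = 1%E) ->
  continuous (fun x => mat2 (lam x) 0 (sig x) (eta x)) ->
  (forall x, 0 < \det (mat2 (lam x) 0 (sig x) (eta x))) ->
  (forall x, 0 < eta x) ->
  (exists E : X -> 'M[R]_2,
      dominated_splitting T Tinv (fun x => mat2 (lam x) 0 (sig x) (eta x))
        E (fun _ => e2line)) ->
  {ae mu, forall x, sig x = 0} ->
  forall L : R -> R,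
    (forall theta : R,
       {ae mu, forall x,
          (fun n : nat => n%:R^-1 *
             ln `|cocycle T (fun y => mat2 (lam y) 0 (sig y) (eta y) *m rotation theta) n x|)
          @ \oo --> L theta}) ->
    exists2 delta : R, 0 < delta &
      forall theta : R, `|theta| < delta -> L theta <= L 0.
Proof.
move=> Hh Hc Tc Tic TK TiK Tmeas Terg Hcont Hdet Heta [E Hdom] Hsig L HL.
have entry_c : forall (i j : 'I_2), continuous (fun x => mat2 (lam x) 0 (sig x) (eta x) i j).
  move=> i j x.
  have := (@continuous_comp _ _ _ _ (fun M : 'M[R]_2 => M i j) x (Hcont x) (@coord_continuous _ 2 2 i j _)). exact.
have lam_c : continuous lam.
  have -> : lam = fun x => mat2 (lam x) 0 (sig x) (eta x) 0 0 by apply/funext => y; rewrite mat2E.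
  exact: entry_c.
have eta_c : continuous eta.
  have -> : eta = fun x => mat2 (lam x) 0 (sig x) (eta x) 1 1 by apply/funext => y; rewrite mat2E.
  exact: entry_c.
have sig_c : continuous sig.
  have -> : sig = fun x => mat2 (lam x) 0 (sig x) (eta x) 1 0 by apply/funext => y; rewrite mat2E.
  exact: entry_c.
have lp : forall z, 0 < lam z.
  by move=> z; have := Hdet z; rewrite det_mat2 mul0r subr0 pmulr_lgt0.
have [l l0 Hl] := @dom_l R X T Tinv lam sig eta E TK lp Heta Hdom.
pose rho z := lam z / eta z.
have rho_c : continuous rho.
  move=> x; change {for x, continuous (lam \* (fun z => (eta z)^-1))}; apply: continuousM; first exact: lam_c.
  by apply: continuousV; [rewrite gt_eqF | exact: eta_c].
have [c _ Mc] := @compact_EVT_max X R rho setT (ex_intro _ point I) Hc (@continuous_subspaceT X R setT rho rho_c).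
pose M := rho c.
have rp : forall z, 0 < rho z by move=> z; rewrite /rho divr_gt0.
have rb : forall z, 0 < rho z <= M.
  by move=> z; rewrite rp /=; apply: Mc; rewrite in_setT.
have M0 : 0 < M by have /andP[] := rb c.
pose g : R := 1 - (l.*2)%:R^-1.
have l2 : 0 < (l.*2)%:R :> R by rewrite ltr0n double_gt0.
have gl : 2^-1 <= g ^+ l.
  have -> : 2^-1 = 1 - l%:R * (l.*2)%:R^-1 :> R.
    rewrite -muln2 natrM invfM mulrA divff ?mul1r; last by rewrite pnatr_eq0 -lt0n.
    by field.
  have h1 : (1:R) <= (l.*2)%:R by rewrite ler1n double_gt0.
  by apply: bern; rewrite invr_ge0 ltW //= invf_le1.
have g1 : g < 1 by rewrite /g gtrBl invr_gt0.
have g0 : 0 < g.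
  rewrite /g subr_gt0 invf_lt1 // ltr1n.
  by rewrite -addnn (leq_add l0 l0).
pose k : R := \sum_(j < l) g ^- j * \prod_(i < j) M.
have k1 : 1 <= k.
  have := @phiw_bounds R g M l (fun _ => M) 0%N l0 g0.
  by case/(_ _)/andP => // _; rewrite M0 lexx.
have k0 : 0 < k by apply: lt_le_trans k1.
pose eps : R := (1 - g) / (2 + k).
have eps0 : 0 < eps by rewrite /eps divr_gt0 // ?subr_gt0 // addr_gt0.
have eps1 : eps * (2 + k) = 1 - g by rewrite /eps mulfVK // gt_eqF // addr_gt0.
have [d d0 Hd] := @trig_near R eps eps0.
exists d => // th hth.
have [s_lt c_gt] := Hd th hth.
have sk0 : 0 <= `|sin th| * k by rewrite mulr_ge0 // ltW.
have c0 : 0 <= cos th.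
  have : eps <= 1 by nra.
  lra.
have gk : g * (k + `|sin th| * k) <= k * (cos th - `|sin th| * k).
  have h1 : g * (k + `|sin th| * k) <= k * (g + eps).
    have : g * (`|sin th| * k) <= eps * k.
      apply: (@le_trans _ _ (`|sin th| * k)); first by rewrite ler_piMl // ltW.
      by rewrite ler_wpM2r // ?ltW.
    lra.
  apply: le_trans h1 _; rewrite ler_wpM2l ?ltW //.
  have : `|sin th| * k <= eps * k by rewrite ler_wpM2r ?ltW.
  nra.
have G := @good_ae R X mu T sig Tc sig_c Tmeas Hsig.
have [x [gx [hx0 hxt]]] : exists x, (forall n, sig (iter n T x) = 0) /\
   ((fun n : nat => n%:R^-1 *
       ln `|cocycle T (fun y => mat2 (lam y) 0 (sig y) (eta y) *m rotation 0) n x|)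
          @ \oo --> L 0) /\
   ((fun n : nat => n%:R^-1 *
       ln `|cocycle T (fun y => mat2 (lam y) 0 (sig y) (eta y) *m rotation th) n x|)
          @ \oo --> L th).
  apply: (@ae_point R X mu).
  have AF : Filter (almost_everywhere mu) := ae_filter_ringOfSetsType mu.
  apply: (@filterS _ _ AF _ _ _ (@filterI _ _ AF _ _ G (@filterI _ _ AF _ _ (HL 0) (HL th)))).
  by move=> y [a1 [a2 a3]].
apply: (@lim_compare R _ _ (ln (2 * k)) _ _ hxt hx0) => n.
pose r m := rho (iter m T x).
pose ph := phiw g l r.
have phb : forall m, 1 <= ph m <= k := fun m => @phiw_bounds R g M l r m l0 g0 (fun m => rb _).
have hprod : forall m, \prod_(i < l) r (m + i)%N <= g ^+ l.
  move=> m; set y := iter m T x.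
  have hy : forall i, (i < l)%N -> sig (iter i T y) = 0.
    by move=> i _; rewrite /y -iterD; exact: gx.
  have := Hl y hy.
  have -> : \prod_(i < l) r (m + i)%N =
      \prod_(i < l) lam (iter i T y) / \prod_(i < l) eta (iter i T y).
    rewrite /r /rho big_split /= -prodfV; congr (_ * _);
      by apply: eq_bigr => i _; rewrite addnC iterD.
  have P0 : 0 < \prod_(i < l) eta (iter i T y) by apply: prodr_gt0.
  move=> h; apply: le_trans gl; rewrite ler_pdivrMr //.
  have : \prod_(i < l) lam (iter i T y) * 2 * 2^-1 <= \prod_(i < l) eta (iter i T y) * 2^-1.
    by rewrite ler_wpM2r // ltW.
  by rewrite -mulrA divff // mulr1 mulrC.
have phs : forall m, lam (iter m T x) * ph m.+1 <= g * eta (iter m T x) * ph m.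
  move=> m; have := @phiw_step R g l r m l0 g0 (fun m => rp _) (hprod m).
  have e : lam (iter m T x) = eta (iter m T x) * r m.
    by rewrite /r /rho mulrC divfK // gt_eqF.
  rewrite e -mulrA => h.
  have -> : g * eta (iter m T x) * ph m = eta (iter m T x) * (g * ph m) by ring.
  by rewrite ler_wpM2l // ltW.
have Hb := @orbit_bound R X T lam sig eta th x gx g k ph lp Heta phb phs c0 (ltW g0) gk n.
have e0 : (fun y => mat2 (lam y) 0 (sig y) (eta y) *m rotation 0) =
          (fun y => mat2 (lam y) 0 (sig y) (eta y)).
  by apply/funext => y; rewrite rotation0 mulmx1.
rewrite e0 cocycle_diag; last by move=> i _; exact: gx.
set Mt := cocycle _ _ n x in Hb *.
set pi := \prod_(i < n) eta (iter i T x) in Hb *.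
have pi0 : 0 < pi by apply: prodr_gt0.
have hM0 : pi <= `|mat2 (\prod_(i < n) lam (iter i T x)) 0 0 pi|.
  by apply: le_trans (mxnorm_ge _ 1 1); rewrite mat2E /= gtr0_norm.
have Mt0 : 0 < `|Mt|.
  rewrite normr_gt0; apply/eqP => h.
  have : \det Mt != 0.
    apply: cocycle_det => y; rewrite det_mulmx det_rotation mulr1.
    by rewrite gt_eqF.
  by rewrite h det0 eqxx.
rewrite -mulrDr ler_wpM2l ?invr_ge0 ?ler0n //.
have k2 : 0 < 2 * k by rewrite mulr_gt0.
apply: (@le_trans _ _ (ln (2 * k * pi))).
  by rewrite ler_ln ?posrE // mulr_gt0.
rewrite lnM ?posrE // addrC lerD2r ler_ln ?posrE //.
by apply: lt_le_trans hM0.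
Qed.
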